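(* Fix a single slot. Let $\beta\in(0,1]$, let $K\ge 1$, and let $J_{\max}=\min(K,\lfloor 1/\beta\rfloor)$. Let $X_1,\dots,X_K$ be i.i.d. nonnegative random variables with $\mathbb{E}X_1=1$, let $r_1,\dots,r_K\ge 0$ and $T_1,\dots,T_K>0$ be constants, and set $s_k=r_kX_k/T_k$, $\bar s_k=\mathbb{E}s_k=r_k/T_k$. Let $(k_1,\dots,k_K)$ be a permutation of $\{1,\dots,K\}$ with $\bar s_{k_1}\ge \bar s_{k_2}\ge\dots\ge\bar s_{k_K}$ (the probing order). For $j\ge 1$ define the reward $y_j=(1-j\beta)\,w_j$ with $w_j=\max(s_{k_1},\dots,s_{k_j})$, and $w_0=0$, $y_0=0$. For $j$ with $j+1\le K$ define the event $$\mathcal{E}_j=\Big\{\,y_j \ \ge\ \mathbb{E}\big[y_{j+1}\,\big|\,s_{k_1},\dots,s_{k_j}\big]\Big\}=\Big\{(1-j\beta)w_j\ \ge\ (1-(j+1)\beta)\,\phi_{j+1}(w_j)\Big\},$$ where $\phi_{i}(w)=\mathbb{E}[\max(w,s_{k_i})]$ for deterministic $w\ge 0$. Then for every $j\ge 0$ with $j+2\le K$ and $(j+1)\beta\le 1$ (in particular for $0\le j\le J_{\max}-2$ whenever $J_{\max}<K$ or $j+2\le K$), one has $\mathcal{E}_j\subseteq\mathcal{E}_{j+1}$; i.e., the sequential probing-and-scheduling stopping problem with rewards $y_j$ is a monotone stopping problem.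
   Context: This models one time slot of a downlink with $K$ users, where probing the channel of one user consumes a fraction $\beta$ of the slot; after probing $j$ users (in the order $k_1,k_2,\dots$) and stopping, the scheduler transmits to the best probed user and earns $(1-j\beta)$ times its throughput-normalized rate. A stopping problem is called monotone if the events $\mathcal{E}_j$ (''stopping now is at least as good as continuing exactly one more stage and then stopping'') are nested increasing, $\mathcal{E}_j\subseteq\mathcal{E}_{j+1}$. *)

(* Defs.v *)
From Stdlib Require Import Reals Lra Lia.
Open Scope R_scope.

(* The common law of the i.i.d. nonnegative X_k with E X_1 = 1, presented  *)
(* as its expectation functional  f |-> E[f(X_1)]  on the class of         *)
(* continuous functions of at most linear growth on [0,oo) (all of these   *)
(* are integrable since E X_1 = 1).  Every probability law on [0,oo) with  *)
(* mean 1 induces such a functional (by Lebesgue integration).             *)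
Definition lin_growth (f : R -> R) : Prop :=
  exists a b : R, forall x, 0 <= x -> Rabs (f x) <= a + b * x.

Definition admissible (f : R -> R) : Prop :=
  (forall x, continuity_pt f x) /\ lin_growth f.

Record law_mean1 := {
  Lexp : (R -> R) -> R;
  Lexp_mono : forall f g, admissible f -> admissible g ->
      (forall x, 0 <= x -> f x <= g x) -> Lexp f <= Lexp g;
  Lexp_lin : forall f g a b, admissible f -> admissible g ->
      Lexp (fun x => a * f x + b * g x) = a * Lexp f + b * Lexp g;
  Lexp_one : Lexp (fun _ => 1) = 1;
  Lexp_mean : Lexp (fun x => x) = 1 }.

(* Users are numbered 1..K; k : nat -> nat is the probing order k_1..k_K. *)
Definition is_perm (K : nat) (k : nat -> nat) : Prop :=
  (forall i, (1 <= i <= K)%nat -> (1 <= k i <= K)%nat) /\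
  (forall i i', (1 <= i <= K)%nat -> (1 <= i' <= K)%nat -> k i = k i' -> i = i').

Definition s_val (r T x : nat -> R) (u : nat) : R := r u * x u / T u.

Definition sbar (r T : nat -> R) (u : nat) : R := r u / T u.

Fixpoint w_val (r T x : nat -> R) (k : nat -> nat) (j : nat) : R :=
  match j with
  | O => 0
  | S j' => Rmax (w_val r T x k j') (s_val r T x (k (S j')))
  end.

Definition y_val (beta : R) (r T x : nat -> R) (k : nat -> nat) (j : nat) : R :=
  (1 - INR j * beta) * w_val r T x k j.

Definition phi (L : law_mean1) (r T : nat -> R) (k : nat -> nat) (i : nat) (w : R) : R :=
  Lexp L (fun z => Rmax w (r (k i) / T (k i) * z)).

Definition event_E (L : law_mean1) (beta : R) (r T x : nat -> R) (k : nat -> nat)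
    (j : nat) : Prop :=
  y_val beta r T x k j >= (1 - INR (S j) * beta) * phi L r T k (S j) (w_val r T x k j).

(* Main.v *)
Require Import Defs.
From Stdlib Require Import Reals Lra Lia Psatz FunctionalExtensionality.
Open Scope R_scope.

Lemma Rmax_eq_abs (w y : R) : Rmax w y = (w + y + Rabs (w - y)) / 2.
Proof. unfold Rmax; destruct (Rle_dec w y); unfold Rabs; destruct (Rcase_abs (w - y)); lra. Qed.

Lemma adm_max (w c : R) : admissible (fun z => Rmax w (c * z)).
Proof.
  split.
  - intro x.
    replace (fun z => Rmax w (c * z)) with (fun z => (w + c * z + Rabs (w - c * z)) / 2).
    2:{ apply functional_extensionality; intro z; now rewrite Rmax_eq_abs. }
    reg.
  - exists (Rabs w), (Rabs c). intros x Hx.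
    rewrite Rmax_eq_abs.
    unfold Rabs at 1 2 3 4; destruct (Rcase_abs w); destruct (Rcase_abs c);
      destruct (Rcase_abs (w - c*x)); destruct (Rcase_abs ((w + c * x + _)/2)); nra.
Qed.

Lemma adm_lin (f g : R -> R) (a b : R) : admissible f -> admissible g ->
  admissible (fun x => a * f x + b * g x).
Proof.
  intros [Cf [af [bf Hf]]] [Cg [ag [bg Hg]]]. split.
  - intro x. apply continuity_pt_plus; apply continuity_pt_scal; auto.
  - exists (Rabs a * af + Rabs b * ag), (Rabs a * bf + Rabs b * bg).
    intros x Hx. specialize (Hf x Hx). specialize (Hg x Hx).
    eapply Rle_trans. apply Rabs_triang. rewrite !Rabs_mult.
    pose proof (Rabs_pos a). pose proof (Rabs_pos b). nra.
Qed.

Lemma adm_one : admissible (fun _ => 1).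
Proof.
  split. intro x. apply continuity_pt_const. intros u v; auto.
  exists 1, 0. intros. rewrite Rabs_R1. lra.
Qed.

Lemma w_nonneg r T x k j : 0 <= w_val r T x k j.
Proof. induction j; simpl. lra. eapply Rle_trans. exact IHj. apply Rmax_l. Qed.

Theorem theorem1 :
  forall (beta : R) (K : nat) (L : law_mean1) (r T : nat -> R) (k : nat -> nat),
    0 < beta <= 1 ->
    (1 <= K)%nat ->
    (forall u, (1 <= u <= K)%nat -> 0 <= r u) ->
    (forall u, (1 <= u <= K)%nat -> 0 < T u) ->
    is_perm K k ->
    (forall i, (1 <= i)%nat -> (i < K)%nat -> sbar r T (k (S i)) <= sbar r T (k i)) ->
    forall j : nat, (j + 2 <= K)%nat -> INR (S j) * beta <= 1 ->
    (* event inclusion E_j ⊆ E_{j+1}: for every outcome, i.e. every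
       realization x of the nonnegative X_1..X_K *)
    forall x : nat -> R, (forall u, (1 <= u <= K)%nat -> 0 <= x u) ->
      event_E L beta r T x k j -> event_E L beta r T x k (S j).
Proof.
  intros beta K L r T k Hb HK Hr HT Hp Hs j Hj Hjb x Hx HE.
  unfold event_E, y_val, phi in *.
  assert (Hab : sbar r T (k (S (S j))) <= sbar r T (k (S j))) by (apply Hs; lia).
  unfold sbar in Hab.
  set (a := r (k (S j)) / T (k (S j))) in *.
  set (b := r (k (S (S j))) / T (k (S (S j)))) in *.
  set (w := w_val r T x k j) in *.
  assert (Hw0 : 0 <= w) by apply w_nonneg.
  assert (Hww : w <= w_val r T x k (S j)) by (simpl; apply Rmax_l).
  set (w' := w_val r T x k (S j)) in *.
  assert (P1 : Lexp L (fun z => Rmax w' (b * z)) <= Lexp L (fun z => Rmax w' (a * z))).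
  { apply Lexp_mono; try apply adm_max. intros z Hz.
    apply Rle_max_compat_l. nra. }
  assert (Lc : forall v c, Lexp L (fun z => 1 * Rmax v (c * z) + (- v) * 1)
                = Lexp L (fun z => Rmax v (c * z)) - v).
  { intros v c. rewrite Lexp_lin; try apply adm_max; try apply adm_one.
    rewrite Lexp_one. ring. }
  assert (P2 : Lexp L (fun z => Rmax w' (a * z)) - w' <= Lexp L (fun z => Rmax w (a * z)) - w).
  { rewrite <- !Lc. apply Lexp_mono; try (apply adm_lin; [apply adm_max | apply adm_one]).
    intros z Hz. unfold Rmax; destruct (Rle_dec w' (a*z)); destruct (Rle_dec w (a*z)); lra. }
  assert (P3 : w' <= Lexp L (fun z => Rmax w' (b * z))).
  { replace w' with (Lexp L (fun z => w' * 1 + 0 * 1)) at 1.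
    2:{ rewrite Lexp_lin; try apply adm_one. rewrite Lexp_one. ring. }
    apply Lexp_mono. apply adm_lin; apply adm_one. apply adm_max.
    intros z Hz. rewrite Rmult_1_r, Rmult_0_l, Rplus_0_r. apply Rmax_l. }
  rewrite !S_INR in *.
  set (Pa := Lexp L (fun z => Rmax w (a * z))) in *.
  set (Pa' := Lexp L (fun z => Rmax w' (a * z))) in *.
  set (Pb' := Lexp L (fun z => Rmax w' (b * z))) in *.
  set (c1 := 1 - (INR j + 1) * beta) in *.
  assert (Hc1 : 0 <= c1) by (unfold c1; lra).
  apply Rle_ge. apply Rge_le in HE.
  replace (1 - (INR j + 1 + 1) * beta) with (c1 - beta) by (unfold c1; ring).
  replace (1 - INR j * beta) with (c1 + beta) in HE by (unfold c1; ring).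
  destruct (Rle_lt_dec 0 (c1 - beta)) as [Hc2|Hc2].
  - assert ((c1 - beta) * Pb' <= (c1 - beta) * Pa') by (apply Rmult_le_compat_l; lra).
    assert ((c1 - beta) * (Pa' - w') <= c1 * (Pa' - w')) by (apply Rmult_le_compat_r; lra).
    assert (c1 * (Pa' - w') <= c1 * (Pa - w)) by (apply Rmult_le_compat_l; lra).
    nra.
  - assert ((c1 - beta) * Pb' <= (c1 - beta) * w') by (apply Rmult_le_compat_neg_l; lra).
    nra.
Qed.
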